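(* Consider the adaptive learning forward guidance model below, for any integer $T\ge1$ and any $\bar i<0$. Then $x_0$ and $\pi_0$ do not depend on $\bar i$: $\partial\pi_0/\partial\bar i=\partial x_0/\partial\bar i=0$ for every $T$. In particular, the model does not exhibit the forward guidance puzzle.
   Context: Parameters: $0<\beta<1$, $\sigma,\lambda>0$, $\psi>1$, gains $\gamma_{x,t},\gamma_{\pi,t}$. Model for $t\ge0$: $x_t=\hat E_t x_{t+1}-\sigma(i_t-\hat E_t\pi_{t+1})$, $\pi_t=\lambda x_t+\beta\hat E_t\pi_{t+1}$, $\hat E_t x_{t+1}=\gamma_{x,t}x_{t-1}+(1-\gamma_{x,t})\hat E_{t-1}x_t$, $\hat E_t\pi_{t+1}=\gamma_{\pi,t}\pi_{t-1}+(1-\gamma_{\pi,t})\hat E_{t-1}\pi_t$, with initial values $x_{-1},\pi_{-1},\hat E_{-1}x_0,\hat E_{-1}\pi_0$ given and not depending on $\bar i$. Policy: $i_t=0$ for $t=0,\dots,T-1$, $i_T=\bar i<0$, and $i_t=\psi\pi_t$ for $t>T$. Denote by $\partial/\partial i_T$ the derivative with respect to $\bar i$. The model exhibits the forward guidance puzzle if $\lim_{T\to\infty}\partial\pi_0/\partial i_T=\lim_{T\to\infty}\partial x_0/\partial i_T=-\infty$. *)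

(* Defs.v *)
From Stdlib Require Import Reals ZArith Lra.
From Coquelicot Require Import Coquelicot.
Open Scope R_scope.

(* Time is indexed by Z so that period t = -1 (initial values) is available.
   Conventions:  x t = x_t,  pi t = pi_t,  i t = i_t,
                 Ex t  = \hat E_t x_{t+1},  Epi t = \hat E_t pi_{t+1}
   (so Ex (-1) = \hat E_{-1} x_0 and Epi (-1) = \hat E_{-1} pi_0).
   gx t, gp t are the gains gamma_{x,t}, gamma_{pi,t}. *)

Definition policy (psi : R) (T : Z) (ibar : R) (pi : Z -> R) (t : Z) : R :=
  if Z.ltb t T then 0 else if Z.eqb t T then ibar else psi * pi t.

Definition solves (beta sigma lambda psi : R) (gx gp : Z -> R)
    (xm1 pim1 Ex0 Epi0 : R) (T : Z) (ibar : R)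
    (x pi Ex Epi i : Z -> R) : Prop :=
  x (-1)%Z = xm1 /\ pi (-1)%Z = pim1 /\ Ex (-1)%Z = Ex0 /\ Epi (-1)%Z = Epi0 /\
  forall t : Z, (0 <= t)%Z ->
    x t = Ex t - sigma * (i t - Epi t) /\
    pi t = lambda * x t + beta * Epi t /\
    Ex t = gx t * x (t - 1)%Z + (1 - gx t) * Ex (t - 1)%Z /\
    Epi t = gp t * pi (t - 1)%Z + (1 - gp t) * Epi (t - 1)%Z /\
    i t = policy psi T ibar pi t.

(* Forward guidance puzzle, given the sequences (indexed by the horizon T)
   of derivatives d pi_0 / d i_T and d x_0 / d i_T. *)
Definition fg_puzzle (dpi dx : nat -> R) : Prop :=
  is_lim_seq dpi m_infty /\ is_lim_seq dx m_infty.

(* Main.v *)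
Require Import Defs.
From Stdlib Require Import Reals ZArith Lra Lia.
From Coquelicot Require Import Coquelicot.
Open Scope R_scope.

Lemma const_deriv (f : R -> R) (c a : R) :
  a < 0 -> (forall ib, ib < 0 -> f ib = c) -> is_derive f a 0.
Proof.
  intros Ha Hf.
  apply (is_derive_ext_loc (fun _ => c)).
  - assert (Hp : 0 < - a) by lra.
    exists (mkposreal _ Hp). intros y Hy.
    unfold ball in Hy; simpl in Hy; unfold AbsRing_ball, abs, minus, plus, opp in Hy; simpl in Hy.
    symmetry; apply Hf.
    apply Rabs_lt_between in Hy. lra.
  - apply (is_derive_const (K:=R_AbsRing) c a).
Qed.

Theorem proposition10 (beta sigma lambda psi : R) (gx gp : Z -> R)
    (xm1 pim1 Ex0 Epi0 : R)
    (X Pi EX EPi I : nat -> R -> Z -> R) :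
  0 < beta < 1 -> 0 < sigma -> 0 < lambda -> 1 < psi ->
  (forall (T : nat) (ib : R), (1 <= T)%nat -> ib < 0 ->
     solves beta sigma lambda psi gx gp xm1 pim1 Ex0 Epi0 (Z.of_nat T) ib
       (X T ib) (Pi T ib) (EX T ib) (EPi T ib) (I T ib)) ->
  (forall (T : nat) (ibar : R), (1 <= T)%nat -> ibar < 0 ->
     is_derive (fun ib => Pi T ib 0%Z) ibar 0 /\
     is_derive (fun ib => X T ib 0%Z) ibar 0) /\
  (forall ibar : R, ibar < 0 ->
     ~ fg_puzzle (fun T => Derive (fun ib => Pi T ib 0%Z) ibar)
                 (fun T => Derive (fun ib => X T ib 0%Z) ibar)).
Proof.
  intros Hb Hs Hl Hp Hsol.
  set (cEx := gx 0%Z * xm1 + (1 - gx 0%Z) * Ex0).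
  set (cEpi := gp 0%Z * pim1 + (1 - gp 0%Z) * Epi0).
  set (cx := cEx - sigma * (0 - cEpi)).
  set (cpi := lambda * cx + beta * cEpi).
  assert (Hc : forall T ib, (1 <= T)%nat -> ib < 0 ->
            Pi T ib 0%Z = cpi /\ X T ib 0%Z = cx).
  { intros T ib HT Hib.
    destruct (Hsol T ib HT Hib) as [H1 [H2 [H3 [H4 H5]]]].
    destruct (H5 0%Z (Z.le_refl 0)) as [E1 [E2 [E3 [E4 E5]]]].
    simpl in E3, E4. rewrite H1, H3 in E3. rewrite H2, H4 in E4.
    unfold policy in E5.
    assert (Hlt : Z.ltb 0 (Z.of_nat T) = true) by (apply Z.ltb_lt; lia).
    rewrite Hlt in E5.
    assert (X T ib 0%Z = cx) as Hx.
    { rewrite E1, E3, E4, E5. unfold cx, cEx, cEpi. ring. }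
    split; [| exact Hx].
    rewrite E2, Hx, E4. unfold cpi, cEpi. ring. }
  assert (HD : forall T ibar, (1 <= T)%nat -> ibar < 0 ->
     is_derive (fun ib => Pi T ib 0%Z) ibar 0 /\
     is_derive (fun ib => X T ib 0%Z) ibar 0).
  { intros T ibar HT Hi. split.
    - apply (const_deriv _ cpi); auto. intros ib Hib; apply (Hc T ib HT Hib).
    - apply (const_deriv _ cx); auto. intros ib Hib; apply (Hc T ib HT Hib). }
  split; [exact HD|].
  intros ibar Hi [Hpi _].
  assert (Hz : is_lim_seq (fun _ => 0) m_infty).
  { apply (is_lim_seq_ext_loc (fun T => Derive (fun ib => Pi T ib 0%Z) ibar)); auto.
    exists 1%nat. intros n Hn.
    apply is_derive_unique. apply (HD n ibar Hn Hi). }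
  pose proof (is_lim_seq_unique _ _ Hz) as U1.
  rewrite (is_lim_seq_unique _ _ (is_lim_seq_const 0)) in U1.
  discriminate.
Qed.
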